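(* Let $\frac{1}{2}\leq \alpha <1$ and let $G$ be a graph with $n$ vertices, $m$ edges, maximum degree $\Delta$ and minimum degree $\delta$. If $1\leq k\leq n-1$, then $$S_k(A_{\alpha}(G))\leq \frac{2\alpha km}{n}+\sqrt{\frac{k(n-k)}{n}\left(2m(1-\alpha)^2+\frac{\alpha^2n}{4}(\Delta-\delta)^2\right)}.$$
   Context: All graphs are simple and undirected. $A_{\alpha}(G)=\alpha D(G)+(1-\alpha)A(G)$, where $A(G)$ is the adjacency matrix and $D(G)$ the diagonal degree matrix. For a real symmetric matrix $M$ with eigenvalues $\lambda_1(M)\geq\cdots\geq\lambda_n(M)$, $S_k(M)=\sum_{i=1}^k\lambda_i(M)$. *)

(* Defs.v *)
From HB Require Import structures.
From mathcomp Require Import all_boot all_order all_algebra.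
Set Implicit Arguments. Unset Strict Implicit. Unset Printing Implicit Defensive.
Import Order.TTheory GRing.Theory Num.Theory.
Local Open Scope ring_scope.

(* A simple undirected graph on vertex set 'I_n is a symmetric, irreflexive
   relation e : rel 'I_n (hypotheses stated in the theorem). *)

Definition deg (n : nat) (e : rel 'I_n) (i : 'I_n) : nat := #|[set j | e i j]|.

Definition nedges (n : nat) (e : rel 'I_n) : nat :=
  #|[set p : 'I_n * 'I_n | e p.1 p.2 && (p.1 < p.2)%N]|.

(* maximum and minimum degree (for n >= 1; all degrees are < n) *)
Definition maxdeg (n : nat) (e : rel 'I_n) : nat := \max_(i : 'I_n) deg e i.
Definition mindeg (n : nat) (e : rel 'I_n) : nat := \big[minn/n]_(i : 'I_n) deg e i.

Definition adjmx (R : nzRingType) (n : nat) (e : rel 'I_n) : 'M[R]_n :=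
  \matrix_(i, j) (e i j)%:R.

Definition degmx (R : nzRingType) (n : nat) (e : rel 'I_n) : 'M[R]_n :=
  diag_mx (\row_i (deg e i)%:R).

Definition Aalpha (R : comNzRingType) (n : nat) (e : rel 'I_n) (alpha : R) : 'M[R]_n :=
  alpha *: degmx R e + (1 - alpha) *: adjmx R e.

Definition sorted_spectrum (R : rcfType) (n : nat) (M : 'M[R]_n) (s : seq R) : Prop :=
  char_poly M = \prod_(x <- s) ('X - x%:P) /\ sorted (fun x y : R => y <= x) s.

Definition Sk (R : rcfType) (s : seq R) (k : nat) : R := \sum_(i < k) s`_i.

(* Main.v *)
Require Import Defs.
From HB Require Import structures.
From mathcomp Require Import all_boot all_order all_algebra ring lra.
Import Order.TTheory GRing.Theory Num.Theory.
Local Open Scope ring_scope.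


Lemma char_poly_sqr (R : comNzRingType) n (A : 'M[R]_n) :
  char_poly (A *m A) \Po 'X^2 = (-1) ^+ n * (char_poly A * (char_poly A \Po - 'X)).
Proof.
set Ac := map_mx polyC A.
have E1 : map_mx (comp_poly 'X^2) (char_poly_mx (A *m A)) =
          char_poly_mx A *m ('X%:M + Ac).
  rewrite /char_poly_mx mulmxDr !mulmxBl mul_scalar_mx mul_mx_scalar.
  rewrite mul_scalar_mx -map_mxM.
  apply/matrixP => i j; rewrite !mxE.
  case: (i == j); rewrite /= ?mulr1n ?mulr0n comp_polyB comp_polyC ?comp_polyX ?comp_poly0; ring.
have E2 : map_mx (comp_poly (- 'X)) (char_poly_mx A) = - ('X%:M + Ac).
  apply/matrixP => i j; rewrite !mxE.
  case: (i == j); rewrite /= ?mulr1n ?mulr0n comp_polyB comp_polyC ?comp_polyX ?comp_poly0; ring.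
rewrite /char_poly -det_map_mx E1 det_mulmx -det_map_mx E2 -(scaleN1r ('X%:M + Ac)) detZ.
have ss : (-1) ^+ n * (-1) ^+ n = 1 :> {poly R} by rewrite -exprMn mulrNN mulr1 expr1n.
by rewrite [RHS]mulrCA (mulrA ((-1) ^+ n)) ss mul1r.
Qed.

Lemma char_poly_sqr_eq (R : comNzRingType) n (A B : 'M[R]_n) :
  char_poly A = char_poly B -> char_poly (A *m A) = char_poly (B *m B).
Proof.
move=> E; apply/polyP => i.
have := congr1 (fun p : {poly R} => p`_(i * 2)) (@char_poly_sqr _ _ A).
rewrite E -(@char_poly_sqr _ _ B) /= !coef_comp_poly_Xn // dvdn_mull // mulnK //.
Qed.

Lemma trace_sqr_eq (R : comNzRingType) n (A B : 'M[R]_n) : (0 < n)%N ->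
  char_poly A = char_poly B -> \tr (A *m A) = \tr (B *m B) /\ \tr A = \tr B.
Proof.
move=> n0 E; split; apply: oppr_inj; rewrite -!char_poly_trace //.
  by rewrite (@char_poly_sqr_eq _ _ _ _ E).
by rewrite E.
Qed.

Lemma spectrum_facts (R : rcfType) n (M : 'M[R]_n) s : (0 < n)%N ->
  sorted_spectrum M s ->
  [/\ size s = n, \tr M = \sum_(i < n) s`_i & \tr (M *m M) = \sum_(i < n) s`_i ^+ 2].
Proof.
move=> n0 [E _].
have sz : size s = n.
  have := congr1 (fun p : {poly R} => size p) E; rewrite size_char_poly size_prod_XsubC.
  by case.
pose D : 'M[R]_n := diag_mx (\row_(i < n) s`_i).
have ED : char_poly M = char_poly D.
  rewrite E char_poly_trig ?diag_mx_is_trig //.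
  rewrite (big_nth 0) big_mkord sz; apply: eq_bigr => i _; rewrite !mxE eqxx /=.
  by rewrite mulr1n.
have [T2 T1] := @trace_sqr_eq _ _ _ _ n0 ED.
split => //.
  by rewrite T1 mxtrace_diag; apply: eq_bigr => i _; rewrite mxE.
by rewrite T2 mulmx_diag mxtrace_diag; apply: eq_bigr => i _; rewrite !mxE expr2.
Qed.
Lemma CS_nat (R : realFieldType) (y : nat -> R) m p : (m < p)%N ->
  (\sum_(m <= i < p) y i) ^+ 2 <= (p - m)%:R * \sum_(m <= i < p) y i ^+ 2.
Proof.
move=> mp; set S := \sum_(m <= i < p) y i; set c : R := (p - m)%:R.
have c0 : 0 < c by rewrite ltr0n subn_gt0.
have H : \sum_(m <= i < p) (c * y i - S) ^+ 2 = c * (c * \sum_(m <= i < p) y i ^+ 2 - S ^+ 2).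
  rewrite (eq_bigr (fun i => c ^+ 2 * y i ^+ 2 - (2 * c * S) * y i + S ^+ 2)); last first.
    by move=> i _; ring.
  rewrite big_split /= sumrB -!mulr_sumr sumr_const_nat -/S -mulr_natr -/c; ring.
have : 0 <= \sum_(m <= i < p) (c * y i - S) ^+ 2 by apply: sumr_ge0 => i _; exact: sqr_ge0.
by rewrite H pmulr_rge0 // subr_ge0.
Qed.

Lemma topk (R : rcfType) (x : nat -> R) n k : (0 < k)%N -> (k < n)%N ->
  \sum_(0 <= i < k) x i <= k%:R * (\sum_(0 <= i < n) x i) / n%:R +
   Num.sqrt (k%:R * (n - k)%:R / n%:R *
     (\sum_(0 <= i < n) x i ^+ 2 - (\sum_(0 <= i < n) x i) ^+ 2 / n%:R)).
Proof.
move=> k0 kn.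
set T := \sum_(0 <= i < n) x i; set Q := \sum_(0 <= i < n) x i ^+ 2.
set nn : R := n%:R; set nk : R := k%:R.
have nn0 : 0 < nn by rewrite ltr0n (leq_ltn_trans _ kn).
have nk0 : 0 < nk by rewrite ltr0n.
have nnk : (n - k)%:R = nn - nk by rewrite natrB // ltnW.
have nkn : nk < nn by rewrite ltr_nat.
pose y i := x i - T / nn.
set a := \sum_(0 <= i < k) x i - nk * T / nn.
have Sy1 : \sum_(0 <= i < k) y i = a.
  by rewrite /y sumrB sumr_const_nat subn0 -mulr_natl /a mulrA.
have Tsplit : T = \sum_(0 <= i < k) x i + \sum_(k <= i < n) x i.
  by rewrite /T (@big_cat_nat _ _ _ k 0 n _ _ (leq0n k) (ltnW kn)).
have Sy2 : \sum_(k <= i < n) y i = - a.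
  rewrite /y sumrB sumr_const_nat -mulr_natl nnk /a.
  have -> : \sum_(k <= i < n) x i = T - \sum_(0 <= i < k) x i by rewrite Tsplit; ring.
  field; lra.
have Sy3 : \sum_(0 <= i < n) y i ^+ 2 = Q - T ^+ 2 / nn.
  rewrite (eq_bigr (fun i => x i ^+ 2 - (2 * T / nn) * x i + (T / nn) ^+ 2)); last first.
    by move=> i _; rewrite /y; ring.
  rewrite big_split /= sumrB -!mulr_sumr sumr_const_nat subn0 -/T -/Q -mulr_natr -/nn.
  field; lra.
have C1 := @CS_nat _ y 0 k k0; rewrite Sy1 subn0 -/nk in C1.
have C2 := @CS_nat _ y k n kn; rewrite Sy2 sqrrN nnk in C2.
have Ssplit : \sum_(0 <= i < n) y i ^+ 2 = \sum_(0 <= i < k) y i ^+ 2 + \sum_(k <= i < n) y i ^+ 2.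
  by rewrite (@big_cat_nat _ _ _ k 0 n _ _ (leq0n k) (ltnW kn)).
rewrite Sy3 in Ssplit.
set A1 := \sum_(0 <= i < k) y i ^+ 2 in C1 Ssplit.
set A2 := \sum_(k <= i < n) y i ^+ 2 in C2 Ssplit.
have key : a ^+ 2 <= nk * (nn - nk) / nn * (Q - T ^+ 2 / nn).
  rewrite Ssplit mulrAC ler_pdivlMr //.
  have P1 : (nn - nk) * a ^+ 2 <= (nn - nk) * (nk * A1) by rewrite ler_wpM2l // subr_ge0 ltW.
  have P2 : nk * a ^+ 2 <= nk * ((nn - nk) * A2) by rewrite ler_wpM2l // ltW.
  have -> : a ^+ 2 * nn = (nn - nk) * a ^+ 2 + nk * a ^+ 2 by ring.
  have -> : nk * (nn - nk) * (A1 + A2) = (nn - nk) * (nk * A1) + nk * ((nn - nk) * A2) by ring.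
  exact: lerD.
have -> : \sum_(0 <= i < k) x i = nk * T / nn + a by rewrite /a; ring.
rewrite lerD2l nnk.
apply: (le_trans (ler_norm a)).
rewrite -sqrtr_sqr ler_sqrt //.
apply: le_trans key; exact: sqr_ge0.
Qed.
Lemma deg_sum n (e : rel 'I_n) i : deg e i = (\sum_j (e i j : nat))%N.
Proof.
rewrite /deg -sum1_card big_mkcond /=; apply: eq_bigr => j _.
by rewrite inE; case: (e i j).
Qed.

Lemma handshake n (e : rel 'I_n) : symmetric e -> irreflexive e ->
  (\sum_i deg e i)%N = (2 * nedges e)%N.
Proof.
move=> sym irr.
have Hm : nedges e = (\sum_i \sum_j (e i j && (i < j)%N : nat))%N.
  rewrite /nedges -sum1_card big_mkcond /= pair_bigA /=; apply: eq_bigr => p _.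
  by rewrite inE; case: (_ && _).
have Hm' : nedges e = (\sum_i \sum_j (e i j && (j < i)%N : nat))%N.
  rewrite Hm exchange_big /=; apply: eq_bigr => i _; apply: eq_bigr => j _.
  by rewrite sym.
rewrite (eq_bigr (fun i => \sum_j ((e i j && (i < j)%N : nat) + (e i j && (j < i)%N : nat)))%N); last first.
  move=> i _; rewrite deg_sum; apply: eq_bigr => j _.
  case: (boolP (e i j)) => //= eij.
  have : i != j by apply: contraTneq eij => ->; rewrite irr.
  by rewrite neq_ltn; case: ltngtP.
rewrite (eq_bigr (fun i => \sum_j (e i j && (i < j)%N : nat) + \sum_j (e i j && (j < i)%N : nat))%N); last by move=> i _; rewrite big_split.
by rewrite big_split /= -Hm -Hm' mul2n addnn.
Qed.

Lemma Aalpha_entry (R : comNzRingType) n (e : rel 'I_n) (alpha : R) i j :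
  Aalpha e alpha i j = alpha * (deg e i)%:R *+ (i == j) + (1 - alpha) * (e i j)%:R.
Proof. by rewrite /Aalpha /degmx /adjmx !mxE; case: (i == j); rewrite ?mulr1n ?mulr0n ?mulr0. Qed.

Lemma trace_A (R : comNzRingType) n (e : rel 'I_n) (alpha : R) :
  irreflexive e -> \tr (Aalpha e alpha) = alpha * \sum_i (deg e i)%:R.
Proof.
move=> irr; rewrite /mxtrace mulr_sumr; apply: eq_bigr => i _.
by rewrite Aalpha_entry eqxx irr mulr1n mulr0 addr0.
Qed.

Lemma trace_A2 (R : comNzRingType) n (e : rel 'I_n) (alpha : R) :
  symmetric e -> irreflexive e ->
  \tr (Aalpha e alpha *m Aalpha e alpha) =
  alpha ^+ 2 * \sum_i (deg e i)%:R ^+ 2 + (1 - alpha) ^+ 2 * \sum_i (deg e i)%:R.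
Proof.
move=> sym irr; rewrite /mxtrace mulr_sumr mulr_sumr -big_split /=.
apply: eq_bigr => i _; rewrite mxE [in X in _ = _ + _ * X]deg_sum natr_sum mulr_sumr.
rewrite (bigD1 i) //= [in X in _ = _ + X](bigD1 i) //= addrA; congr (_ + _).
  rewrite !Aalpha_entry eqxx irr mulr1n !mulr0 !addr0; ring.
apply: eq_bigr => j ij; rewrite !Aalpha_entry eq_sym (negbTE ij) (sym j i) !mulr0n !add0r.
by case: (e i j); rewrite ?mulr0 ?mulr1 //=; ring.
Qed.
Lemma deg_bounds n (e : rel 'I_n) i : (mindeg e <= deg e i <= maxdeg e)%N.
Proof.
rewrite leq_bigmax andbT /mindeg.
have : i \in index_enum 'I_n by rewrite mem_index_enum.
elim: (index_enum 'I_n) => [//|a r IH]; rewrite big_cons inE.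
case/orP => [/eqP <-|ir]; first exact: geq_minl.
exact: leq_trans (geq_minr _ _) (IH ir).
Qed.

Lemma popoviciu (R : realFieldType) n (d : 'I_n -> R) lo hi : (0 < n)%N ->
  (forall i, lo <= d i <= hi) ->
  \sum_i d i ^+ 2 - (\sum_i d i) ^+ 2 / n%:R <= n%:R / 4 * (hi - lo) ^+ 2.
Proof.
move=> n0 H; set S := \sum_i d i; set nn : R := n%:R.
have nn0 : 0 < nn by rewrite ltr0n.
have P : 0 <= \sum_i (hi - d i) * (d i - lo).
  apply: sumr_ge0 => i _; have /andP[h1 h2] := H i.
  by apply: mulr_ge0; rewrite subr_ge0.
have E : \sum_i (hi - d i) * (d i - lo) = (hi + lo) * S - nn * hi * lo - \sum_i d i ^+ 2.
  rewrite (eq_bigr (fun i => (hi + lo) * d i - hi * lo - d i ^+ 2)); last by move=> i _; ring.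
  rewrite !sumrB -mulr_sumr sumr_const card_ord -/S -mulr_natl -/nn; ring.
have Q : 0 <= (S - nn * (hi + lo) / 2) ^+ 2 / nn by apply: divr_ge0; [exact: sqr_ge0| exact: ltW].
have I : nn / 4 * (hi - lo) ^+ 2 - ((hi + lo) * S - nn * hi * lo - S ^+ 2 / nn) =
         (S - nn * (hi + lo) / 2) ^+ 2 / nn by field; lra.
lra.
Qed.

Theorem corollary3p1 (R : rcfType) (n : nat) (e : rel 'I_n) (alpha : R)
    (k : nat) (s : seq R) :
  symmetric e -> irreflexive e ->
  1 / 2 <= alpha -> alpha < 1 ->
  (1 <= k)%N -> (k <= n - 1)%N ->
  sorted_spectrum (Aalpha e alpha) s ->
  Sk s k <=
    2 * alpha * k%:R * (nedges e)%:R / n%:R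
    + Num.sqrt (k%:R * (n - k)%:R / n%:R *
        (2 * (nedges e)%:R * (1 - alpha) ^+ 2
         + alpha ^+ 2 * n%:R / 4 * ((maxdeg e)%:R - (mindeg e)%:R) ^+ 2)).
Proof.
move=> sym irr ha1 ha2 k1 kn Hs.
have kn' : (k < n)%N.
  by case: n kn {Hs} e sym irr => [|n']; rewrite ?subn1 /=; [rewrite leqn0 => /eqP kz; rewrite kz in k1|].
have n0 : (0 < n)%N by apply: leq_ltn_trans kn'.
have [sz Tr Tr2] := @spectrum_facts _ _ _ _ n0 Hs.
have HS : \sum_i (deg e i)%:R = 2 * (nedges e)%:R :> R.
  by rewrite -natr_sum handshake // natrM.
have := @topk _ (fun i => s`_i) n k k1 kn'.
rewrite !big_mkord -Tr -Tr2 trace_A // trace_A2 // HS /Sk => H.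
apply: (le_trans H).
set m : R := (nedges e)%:R.
set nn : R := n%:R.
set nk : R := k%:R.
have nn0 : 0 < nn by rewrite ltr0n.
have nnk : (n - k)%:R = nn - nk :> R by rewrite natrB // ltnW.
have nkn : nk < nn by rewrite ltr_nat.
have nk0 : 0 < nk by rewrite ltr0n.
rewrite nnk; apply: lerD; first by rewrite le_eqVlt; apply/orP; left; apply/eqP; field; lra.
have c0 : 0 <= nk * (nn - nk) / nn.
  by apply: divr_ge0; [apply: mulr_ge0; lra | lra].
rewrite ler_sqrt; last first.
  apply: mulr_ge0 => //; apply: addr_ge0.
    by apply: mulr_ge0; [apply: mulr_ge0; [lra| rewrite /m ler0n] | exact: sqr_ge0].
  apply: mulr_ge0; last exact: sqr_ge0.
  apply: mulr_ge0; last lra.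
  by apply: mulr_ge0; [exact: sqr_ge0 | lra].
apply: ler_wpM2l => //.
have Pop := @popoviciu R n (fun i => (deg e i)%:R) (mindeg e)%:R (maxdeg e)%:R n0.
have Pop' : \sum_i (deg e i)%:R ^+ 2 - (2 * m) ^+ 2 / nn <= nn / 4 * ((maxdeg e)%:R - (mindeg e)%:R) ^+ 2.
  rewrite -HS; apply: Pop => i; have /andP[h1 h2] := @deg_bounds _ e i.
  by rewrite !ler_nat h1 h2.
have a2 : 0 <= alpha ^+ 2 by exact: sqr_ge0.
have := ler_wpM2l a2 Pop'.
set X := \sum_i _; set D := ((maxdeg e)%:R - (mindeg e)%:R) ^+ 2.
move=> HH.
have E1 : alpha ^+ 2 * X + (1 - alpha) ^+ 2 * (2 * m) - (alpha * (2 * m)) ^+ 2 / nn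
  = alpha ^+ 2 * (X - (2 * m) ^+ 2 / nn) + 2 * m * (1 - alpha) ^+ 2 by field; lra.
have E2 : alpha ^+ 2 * (nn / 4 * D) = alpha ^+ 2 * nn / 4 * D by field.
rewrite E1 -E2; lra.
Qed.
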